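(* Let $n\geq 1$ be an integer and let $0\leq p_0\leq p_1\leq\cdots\leq p_n\leq 1$. Then there exists an index $i\in\{1,\dots,n\}$ such that for every $\alpha\in[0,1]$, \[ h_2(\alpha p_{i-1}+(1-\alpha)p_i)-\alpha h_2(p_{i-1})-(1-\alpha)h_2(p_i)\leq \frac{8}{(n+1)^2}. \]
   Context: $h_2(p)=-p\log p-(1-p)\log(1-p)$ is the binary entropy function with natural logarithm. *)

(* Defs.v *)
From Stdlib Require Import Reals.
Open Scope R_scope.

Definition xlnx (x : R) : R := if Rle_dec x 0 then 0 else x * ln x.

Definition h2 (p : R) : R := - xlnx p - xlnx (1 - p).

(* Main.v *)
Require Import Defs.
From Stdlib Require Import Reals.
From Stdlib Require Import Lra Lia Psatz Classical.
Open Scope R_scope.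

Lemma ln_le_sub1 y : 0 < y -> ln y <= y - 1.
Proof. intros Hy. pose proof (exp_ineq1_le (ln y)). rewrite exp_ln in H; lra. Qed.

Lemma ln_diff y w : 0 < y -> 0 < w -> ln y - ln w <= y / w - 1.
Proof.
  intros Hy Hw.
  replace (ln y - ln w) with (ln (y * / w)).
  - apply ln_le_sub1. apply Rmult_lt_0_compat; auto. apply Rinv_0_lt_compat; auto.
  - rewrite ln_mult; [|auto|apply Rinv_0_lt_compat; auto]. rewrite ln_Rinv; auto.
Qed.

Lemma xlnx_0 : xlnx 0 = 0.
Proof. unfold xlnx; destruct (Rle_dec 0 0); lra. Qed.

Lemma xlnx_up y w : 0 <= y -> 0 < w -> xlnx y <= y * ln w + y * y / w - y.
Proof.
  intros Hy Hw. unfold xlnx. destruct (Rle_dec y 0).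
  - replace y with 0 by lra. replace (0 * ln w + 0 * 0 / w - 0) with 0 by (field; lra). lra.
  - assert (H := ln_diff y w ltac:(lra) Hw).
    assert (H2 : y * (ln y - ln w) <= y * (y / w - 1)) by (apply Rmult_le_compat_l; lra).
    replace (y * (y / w - 1)) with (y * y / w - y) in H2 by (field; lra). nra.
Qed.

Lemma xlnx_low y w : 0 <= y -> 0 < w -> y * ln w - w + y <= xlnx y.
Proof.
  intros Hy Hw. unfold xlnx. destruct (Rle_dec y 0).
  - replace y with 0 by lra. lra.
  - assert (H := ln_diff w y Hw ltac:(lra)).
    assert (H2 : y * (ln w - ln y) <= y * (w / y - 1)) by (apply Rmult_le_compat_l; lra).
    replace (y * (w / y - 1)) with (w - y) in H2 by (field; lra). nra.
Qed.

Lemma xlnx_nonpos y : 0 <= y <= 1 -> xlnx y <= 0.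
Proof.
  intros Hy. unfold xlnx. destruct (Rle_dec y 0). lra.
  assert (H := ln_le_sub1 y ltac:(lra)). nra.
Qed.

Lemma J_bound al u v : 0 <= al <= 1 -> 0 <= u -> 0 <= v ->
  al * xlnx u + (1 - al) * xlnx v - xlnx (al * u + (1 - al) * v)
  <= (sqrt v - sqrt u) ^ 2.
Proof.
  intros Hal Hu Hv.
  assert (Hau : 0 <= al * u) by (apply Rmult_le_pos; lra).
  assert (Hbv : 0 <= (1 - al) * v) by (apply Rmult_le_pos; lra).
  destruct (Rle_dec (al * u + (1 - al) * v) 0) as [Hw0|Hw0].
  - assert (E1 : al * xlnx u = 0).
    { destruct (Req_dec al 0) as [->|Ha]. ring.
      assert (u = 0). { assert (al * u = 0) by lra. destruct (Rmult_integral _ _ H); lra. }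
      subst. rewrite xlnx_0; ring. }
    assert (E2 : (1 - al) * xlnx v = 0).
    { destruct (Req_dec (1 - al) 0) as [He|Ha]. rewrite He; ring.
      assert (v = 0). { assert ((1 - al) * v = 0) by lra. destruct (Rmult_integral _ _ H); lra. }
      subst. rewrite xlnx_0; ring. }
    assert (E3 : xlnx (al * u + (1 - al) * v) = 0).
    { unfold xlnx. destruct (Rle_dec _ 0); lra. }
    rewrite E1, E2, E3. pose proof (pow2_ge_0 (sqrt v - sqrt u)). lra.
  - assert (Hw : 0 < al * u + (1 - al) * v) by lra.
    set (w := al * u + (1 - al) * v) in *.
    assert (Ew : xlnx w = w * ln w) by (unfold xlnx; destruct (Rle_dec w 0); lra).
    pose proof (xlnx_up u w Hu Hw) as H1.
    pose proof (xlnx_up v w Hv Hw) as H2.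
    assert (H1' : al * xlnx u <= al * (u * ln w + u * u / w - u)) by (apply Rmult_le_compat_l; lra).
    assert (H2' : (1 - al) * xlnx v <= (1 - al) * (v * ln w + v * v / w - v)) by (apply Rmult_le_compat_l; lra).
    set (s := sqrt u). set (t := sqrt v).
    assert (Hs : u = s * s) by (unfold s; rewrite sqrt_sqrt; lra).
    assert (Ht : v = t * t) by (unfold t; rewrite sqrt_sqrt; lra).
    assert (key : al * u * u + (1 - al) * v * v - w * w <= w * (t - s) ^ 2).
    { unfold w. rewrite Hs, Ht.
      assert (0 <= (t - s) ^ 2 * (al * s - (1 - al) * t) ^ 2) by
        (apply Rmult_le_pos; apply pow2_ge_0).
      match goal with |- ?L <= ?R => assert (R - L = (t - s) ^ 2 * (al * s - (1 - al) * t) ^ 2) by ring end.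
      lra. }
    assert (E : al * (u * ln w + u * u / w - u) + (1 - al) * (v * ln w + v * v / w - v)
                - w * ln w = (al * u * u + (1 - al) * v * v - w * w) / w).
    { set (L := ln w). clearbody L. unfold w. field. apply Rgt_not_eq; exact Hw. }
    assert (E2 : (al * u * u + (1 - al) * v * v - w * w) / w <= (t - s) ^ 2).
    { apply (Rmult_le_reg_r w); auto. unfold Rdiv. rewrite Rmult_assoc, Rinv_l; lra. }
    rewrite Ew. lra.
Qed.

Lemma gap_bound al a b : 0 <= al <= 1 -> 0 <= a <= 1 -> 0 <= b <= 1 ->
  h2 (al * a + (1 - al) * b) - al * h2 a - (1 - al) * h2 b
  <= (sqrt b - sqrt a) ^ 2 + (sqrt (1 - a) - sqrt (1 - b)) ^ 2.
Proof.
  intros Hal Ha Hb. unfold h2.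
  pose proof (J_bound al a b Hal ltac:(lra) ltac:(lra)) as J1.
  pose proof (J_bound (1 - al) (1 - b) (1 - a) ltac:(lra) ltac:(lra) ltac:(lra)) as J2.
  replace (1 - (al * a + (1 - al) * b)) with ((1 - al) * (1 - b) + (1 - (1 - al)) * (1 - a)) by ring.
  lra.
Qed.

Lemma ln2_lt : ln 2 < 8 / 9.
Proof.
  assert (H : 2 < exp (8 / 9)).
  { replace (8 / 9) with (4 / 9 + 4 / 9) by field. rewrite exp_plus.
    pose proof (exp_ineq1 (4 / 9) ltac:(lra)). nra. }
  rewrite <- (ln_exp (8 / 9)). apply ln_increasing; lra.
Qed.

Lemma gap_ln2 al a b : 0 <= al <= 1 -> 0 <= a <= 1 -> 0 <= b <= 1 ->
  h2 (al * a + (1 - al) * b) - al * h2 a - (1 - al) * h2 b <= ln 2.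
Proof.
  intros Hal Ha Hb. set (x := al * a + (1 - al) * b).
  assert (Hx : 0 <= x <= 1) by (unfold x; nra).
  assert (Hha : 0 <= h2 a) by (unfold h2; pose proof (xlnx_nonpos a Ha); pose proof (xlnx_nonpos (1 - a) ltac:(lra)); lra).
  assert (Hhb : 0 <= h2 b) by (unfold h2; pose proof (xlnx_nonpos b Hb); pose proof (xlnx_nonpos (1 - b) ltac:(lra)); lra).
  assert (Hhx : h2 x <= ln 2).
  { unfold h2. pose proof (xlnx_low x (/ 2) ltac:(lra) ltac:(lra)).
    pose proof (xlnx_low (1 - x) (/ 2) ltac:(lra) ltac:(lra)).
    rewrite ln_Rinv in *; lra. }
  assert (0 <= al * h2 a) by (apply Rmult_le_pos; lra).
  assert (0 <= (1 - al) * h2 b) by (apply Rmult_le_pos; lra).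
  lra.
Qed.

Fixpoint ssum (f : nat -> R) (n : nat) : R :=
  match n with O => 0 | S m => ssum f m + f m end.

Lemma ssum_ge f n c : (forall k, (k < n)%nat -> c < f k) -> INR n * c <= ssum f n.
Proof.
  induction n; intros H. simpl; lra.
  rewrite S_INR; simpl ssum. assert (IH := IHn (fun k Hk => H k ltac:(lia))).
  assert (c < f n) by (apply H; lia). lra.
Qed.

Lemma pigeon f n : (1 <= n)%nat -> exists k, (k < n)%nat /\ f k * INR n <= ssum f n.
Proof.
  intros Hn. apply NNPP. intros Hc.
  assert (Hall : forall k, (k < n)%nat -> ssum f n / INR n < f k).
  { intros k Hk. apply Rnot_le_lt. intros Hle. apply Hc. exists k. split; auto.
    assert (0 < INR n) by (apply lt_0_INR; lia).
    apply (Rmult_le_compat_r (INR n)) in Hle; [|lra].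
    replace (ssum f n / INR n * INR n) with (ssum f n) in Hle by (field; lra). lra. }
  destruct n as [|m]. lia.
  assert (IH := ssum_ge f m (ssum f (S m) / INR (S m)) (fun k Hk => Hall k ltac:(lia))).
  assert (Hl := Hall m ltac:(lia)).
  assert (0 < INR (S m)) by (apply lt_0_INR; lia).
  assert (E : INR (S m) * (ssum f (S m) / INR (S m)) = ssum f (S m)) by (field; lra).
  assert (Es : ssum f (S m) = ssum f m + f m) by reflexivity.
  set (c := ssum f (S m) / INR (S m)) in *. clearbody c.
  rewrite S_INR in E. lra.
Qed.

Theorem corollary1 (n : nat) (p : nat -> R) :
  (1 <= n)%nat ->
  0 <= p 0%nat ->
  (forall k : nat, (k < n)%nat -> p k <= p (S k)) ->
  p n <= 1 ->
  exists i : nat, (1 <= i <= n)%nat /\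
    forall alpha : R, 0 <= alpha <= 1 ->
      h2 (alpha * p (i - 1)%nat + (1 - alpha) * p i)
        - alpha * h2 (p (i - 1)%nat) - (1 - alpha) * h2 (p i)
      <= 8 / (INR n + 1) ^ 2.
Proof.
  intros Hn H0 Hmon H1.
  assert (Hmono : forall j k, (k + j <= n)%nat -> p k <= p (k + j)%nat).
  { induction j; intros k Hk. rewrite Nat.add_0_r; lra.
    replace (k + S j)%nat with (S (k + j)) by lia.
    assert (p (k + j)%nat <= p (S (k + j))) by (apply Hmon; lia).
    assert (p k <= p (k + j)%nat) by (apply IHj; lia). lra. }
  assert (Hrange : forall k, (k <= n)%nat -> 0 <= p k <= 1).
  { intros k Hk. split.
    - assert (H := Hmono k 0%nat ltac:(lia)). simpl in H. lra.
    - assert (H := Hmono (n - k)%nat k ltac:(lia)).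
      replace (k + (n - k))%nat with n in H by lia. lra. }
  destruct (Compare_dec.le_lt_dec n 2) as [Hsmall|Hbig].
  - exists 1%nat. split. lia. intros al Hal. change (1 - 1)%nat with 0%nat.
    eapply Rle_trans. apply gap_ln2; auto; apply Hrange; lia.
    assert (INR n <= 2) by (replace 2 with (INR 2) by (simpl; lra); apply le_INR; lia).
    assert (1 <= INR n) by (replace 1 with (INR 1) by (simpl; lra); apply le_INR; lia).
    pose proof ln2_lt.
    assert (8 / 9 <= 8 / (INR n + 1) ^ 2).
    { apply Rmult_le_compat_l. lra. apply Rinv_le_contravar. nra. nra. }
    lra.
  - set (f := fun k => sqrt (p (S k)) - sqrt (p k) + (sqrt (1 - p k) - sqrt (1 - p (S k)))).
    assert (Htel : forall m, (m <= n)%nat ->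
      ssum f m = sqrt (p m) - sqrt (p 0%nat) + sqrt (1 - p 0%nat) - sqrt (1 - p m)).
    { induction m; intros Hm; simpl. lra. rewrite IHm by lia. unfold f. lra. }
    assert (Hsum : ssum f n <= 2).
    { rewrite Htel by lia.
      pose proof (sqrt_le_1_alt (p n) 1 ltac:(lra)) as Q1.
      pose proof (sqrt_le_1_alt (1 - p 0%nat) 1 ltac:(lra)) as Q2.
      rewrite sqrt_1 in Q1, Q2.
      pose proof (sqrt_pos (p 0%nat)). pose proof (sqrt_pos (1 - p n)). lra. }
    destruct (pigeon f n Hn) as [k [Hk Hfk]].
    exists (S k). split. lia. intros al Hal.
    replace (S k - 1)%nat with k by lia.
    eapply Rle_trans. apply gap_bound; auto; apply Hrange; lia.
    assert (HA : 0 <= sqrt (p (S k)) - sqrt (p k)) by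
      (pose proof (sqrt_le_1_alt _ _ (Hmon k Hk)); lra).
    assert (HB : 0 <= sqrt (1 - p k) - sqrt (1 - p (S k))) by
      (assert (1 - p (S k) <= 1 - p k) by (pose proof (Hmon k Hk); lra);
       pose proof (sqrt_le_1_alt _ _ H); lra).
    set (A := sqrt (p (S k)) - sqrt (p k)) in *.
    set (B := sqrt (1 - p k) - sqrt (1 - p (S k))) in *.
    assert (HfA : f k = A + B) by reflexivity.
    set (N := INR n) in *.
    assert (HN : 3 <= N) by (unfold N; replace 3 with (INR 3) by (simpl; lra); apply le_INR; lia).
    assert (HAB : (A + B) * N <= 2) by (rewrite HfA in Hfk; lra).
    assert (Hsq : (A + B) ^ 2 * N ^ 2 <= 4).
    { assert (0 <= (A + B) * N) by nra. nra. }
    assert (h1 : A ^ 2 + B ^ 2 <= (A + B) ^ 2) by nra.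
    assert (h2 : (N + 1) ^ 2 <= 2 * N ^ 2) by nra.
    assert (h3 : (A ^ 2 + B ^ 2) * (N + 1) ^ 2 <= (A + B) ^ 2 * (2 * N ^ 2)).
    { apply Rmult_le_compat; auto; [nra | nra]. }
    assert (Hfin : (A ^ 2 + B ^ 2) * (N + 1) ^ 2 <= 8) by lra.
    apply (Rmult_le_reg_r ((N + 1) ^ 2)). nra.
    unfold Rdiv. rewrite Rmult_assoc, Rinv_l by nra. lra.
Qed.
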